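(* Suppose $C_0$ is sufficiently large. Then for every outcome of the random choices, if $f_1,f_2,f_3,f_4\in\mathcal F$ satisfy $n_{f_1}+n_{f_2}=n_{f_3}+n_{f_4}$, then $\{f_1,f_2\}=\{f_3,f_4\}$. Consequently $S=\{n_f:f\in\mathcal F\}$ is always a Sidon set.
   Context: Generalised base notation: for a sequence $\boldsymbol b=(b_1,b_2,\dots)$ of integers $\ge 2$ and arbitrary integers $x_1,\dots,x_n$, write $[x_n\,\dots\,x_1]_{\boldsymbol b}:=x_1+x_2b_1+\dots+x_nb_1b_2\cdots b_{n-1}$. Standing data: Fix a prime $p$ and a set $A\subset\{1,\dots,\lfloor p/2\rfloor-1\}$ such that $A\cap(A+A+\{0,1\})=\emptyset$ and $A+A+A$ contains $p+2$ consecutive integers. Let $c=0.35$. Let $C_0>100p$ be a large absolute constant. Let $q\ge C_0$ be a prime power. For $d\ge1$ let $\mathcal I_d$ be the set of irreducible monic polynomials of degree $d$ in $\mathbb F_q[t]$. For $i\ge1$ let $g_i\in\mathcal I_{2i-1}$ be arbitrary and $\omega_i$ a generator of $(\mathbb F_q[t]/(g_i))^\times$. For $k\ge C_0$ let $\mathcal F_k:=\bigcup_{i:\,ck^2\le 2i<c(k+1)^2}\mathcal I_{2i}$ and $\mathcal F:=\bigcup_{k\ge C_0}\mathcal F_k$. Let $b_i=q^i-1$ for $i$ odd and $b_i=p$ for $i$ even. For $k\ge C_0$, $f\in\mathcal F_k$: $e_i(f)$ ($1\le i\le k$) is the unique integer with $0\le e_i(f)<q^{2i-1}-1$ and $\omega_i^{e_i(f)}\equiv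 f\pmod{g_i}$; $r_1(f),\dots,r_k(f)$ are uniform on $A$; $s(f)$ is uniform on $\{1,\dots,q^{3k}\}$; all these random variables (over all $f,i$) are independent. $n_f:=[s(f)\,r_k(f)\,e_k(f)\,\dots\,r_1(f)\,e_1(f)]_{\boldsymbol b}$, and $S:=\{n_f:f\in\mathcal F\}$. A Sidon set is a set of positive integers all of whose pairwise sums $s_1+s_2$ ($s_1\le s_2$) are distinct. *)

(* Defs.v *)
From mathcomp Require Import all_boot all_order all_algebra all_field.
Set Implicit Arguments. Unset Strict Implicit. Unset Printing Implicit Defensive.
Import GRing.Theory.
Local Open Scope ring_scope.

(* Generalised base notation: for xs = [:: x_1; x_2; ...; x_n],
   gbase b xs = x_1 + x_2 b_1 + ... + x_n b_1 ... b_{n-1}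
   (b is indexed from 1: b_i = b i). *)
Definition gbase (b : nat -> nat) (xs : seq nat) : nat :=
  (\sum_(j < size xs) nth 0%N xs j * \prod_(l < j) b l.+1)%N.

Definition bseq (q p : nat) (i : nat) : nat :=
  if odd i then (q ^ i - 1)%N else p.

Definition good_A (p : nat) (A : seq nat) : Prop :=
  (forall a, a \in A -> (1 <= a <= p./2 - 1)%N) /\
  (forall a b c t, a \in A -> b \in A -> c \in A -> (t <= 1)%N -> a != (b + c + t)%N) /\
  (exists m : nat, forall j, (j < p.+2)%N ->
     exists a b c, [/\ a \in A, b \in A, c \in A & (a + b + c = m + j)%N]).

Definition is_gen (F : finFieldType) (g w : {poly F}) : Prop :=
  coprimep w g /\ forall h : {poly F}, coprimep h g -> exists e : nat, g %| w ^+ e - h.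

(* f \in F_k, with c = 0.35 = 7/20:  f monic irreducible of degree 2i with
   c k^2 <= 2i < c (k+1)^2, i.e. 7 k^2 <= 40 i < 7 (k+1)^2. *)
Definition inFk (F : finFieldType) (k : nat) (f : {poly F}) : Prop :=
  f \is monic /\ irreducible_poly f /\
  exists i : nat, size f = (2 * i).+1 /\ (7 * k ^ 2 <= 40 * i)%N /\ (40 * i < 7 * k.+1 ^ 2)%N.

(* discrete log: the least e in [0, N) with w^e = f mod g
   (this is the unique such e when w generates the units and N = |units|). *)
Definition elog (F : finFieldType) (g w f : {poly F}) (N : nat) : nat :=
  find (fun e => g %| w ^+ e - f) (iota 0 N).

Definition nval (F : finFieldType) (p : nat) (g w : nat -> {poly F})
  (r : {poly F} -> nat -> nat) (s : {poly F} -> nat) (k : nat) (f : {poly F}) : nat :=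
  gbase (bseq #|F| p)
    (flatten [seq [:: elog (g i) (w i) f (#|F| ^ (2 * i).-1 - 1)%N; r f i] | i <- iota 1 k]
       ++ [:: s f]).

Definition Sidon (S : nat -> Prop) : Prop :=
  (forall n, S n -> (0 < n)%N) /\
  (forall a b c d, S a -> S b -> S c -> S d -> (a <= b)%N -> (c <= d)%N ->
     (a + b = c + d)%N -> a = c /\ b = d).

(* Main.v *)
Require Import Defs.
From mathcomp Require Import all_boot all_order all_algebra all_field.
From mathcomp Require Import qpoly qfpoly zify ring.
Set Implicit Arguments. Unset Strict Implicit. Unset Printing Implicit Defensive.
Import GRing.Theory.

Definition PP (b : nat -> nat) (j : nat) : nat := (\prod_(l < j) b l.+1)%N.


Lemma PPS b j : PP b j.+1 = (PP b j * b j.+1)%N.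
Proof. by rewrite /PP big_ord_recr. Qed.

Lemma PP0 b : PP b 0 = 1%N.
Proof. by rewrite /PP big_ord0. Qed.

Lemma PP_dvd b j n : (PP b j %| PP b (j + n))%N.
Proof.
elim: n => [|n IH]; first by rewrite addn0.
by rewrite addnS PPS; apply: dvdn_mulr.
Qed.

Lemma gbase_rcons b xs x : gbase b (rcons xs x) = (gbase b xs + x * PP b (size xs))%N.
Proof.
rewrite /gbase size_rcons big_ord_recr /= nth_rcons ltnn eqxx; congr (_ + _)%N.
by apply: eq_bigr => i _; rewrite nth_rcons ltn_ord.
Qed.

Lemma gbase_take_succ b xs t : (t < size xs)%N ->
  gbase b (take t.+1 xs) = (gbase b (take t xs) + nth 0%N xs t * PP b t)%N.
Proof.
move=> ht; rewrite (take_nth 0%N ht) gbase_rcons size_take ht //.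
Qed.

Lemma gbase_split b xs t : (t <= size xs)%N ->
  exists H, gbase b xs = (gbase b (take t xs) + PP b t * H)%N.
Proof.
move=> ht.
suff: forall n, (t + n <= size xs)%N -> exists H, gbase b (take (t + n) xs) = (gbase b (take t xs) + PP b t * H)%N.
  move=> /(_ (size xs - t)%N); rewrite subnKC // take_size; apply; by [].
elim=> [|n IH] hn; first by exists 0%N; rewrite addn0 muln0 addn0.
have hn' : (t + n <= size xs)%N by rewrite addnS in hn; exact: ltnW.
have [H EH] := IH hn'.
rewrite addnS gbase_take_succ; last by rewrite addnS in hn.
have [c Ec] := dvdnP (PP_dvd b t n).
exists (H + nth 0%N xs (t + n) * c)%N.
rewrite EH Ec; lia.
Qed.

Lemma dm_uniq P X Y X' Y' : (X < P)%N -> (X' < P)%N ->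
  (X + P * Y = X' + P * Y')%N -> X = X' /\ Y = Y'.
Proof.
move=> hX hX' E.
have HY : Y = Y'.
  case: (ltngtP Y Y') => // hY.
  - have : (P * Y.+1 <= P * Y')%N by rewrite leq_mul2l hY orbT.
    rewrite mulnS; lia.
  - have : (P * Y'.+1 <= P * Y)%N by rewrite leq_mul2l hY orbT.
    rewrite mulnS; lia.
split=> //; subst; lia.
Qed.
Section PolyFacts.
Local Open Scope ring_scope.
Variable F : finFieldType.
Implicit Types g h w f : {poly F}.

Lemma fermat_poly g h :
  g \is monic -> irreducible_poly g ->
  g %| h ^+ (#|F| ^ (size g).-1)%N - h.
Proof.
move=> gm gi.
have hI : monic_irreducible_poly g by split.
pose K := {poly %/ g with hI}.
pose x : K := in_qpoly g h.
have := expf_card x.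
rewrite card_qfpoly.
move=> E.
have E2 : in_qpoly g (h ^+ (#|F| ^ (size g).-1)%N - h) = 0 :> {poly %/ g}.
  by rewrite rmorphB rmorphXn /= E subrr.
have := congr1 (fun z : {poly %/ g} => (z : {poly F})) E2.
rewrite /= /in_qpoly /= (mk_monicE hI).
by rewrite -(Pdiv.IdomainMonic.modpE gm) => /modp_eq0P.
Qed.

Lemma wN1 g w : g \is monic -> irreducible_poly g -> coprimep w g ->
  g %| w ^+ (#|F| ^ (size g).-1 - 1)%N - 1.
Proof.
move=> gm gi cw.
have := fermat_poly w gm gi.
have hQ : (0 < #|F| ^ (size g).-1)%N by rewrite expn_gt0 (ltnW (finNzRing_gt1 F)).
rewrite -{1}(subnK hQ) addn1 exprS.
have -> : w * w ^+ (#|F| ^ (size g).-1 - 1) - w = w * (w ^+ (#|F| ^ (size g).-1 - 1) - 1) by ring.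
by rewrite Gauss_dvdpr // coprimep_sym.
Qed.

Lemma pow_modN g w N a : g %| w ^+ N - 1 -> g %| w ^+ a - w ^+ (a %% N).
Proof.
move=> hN.
rewrite {1}(divn_eq a N) exprD exprM exprAC.
have -> : (w ^+ N) ^+ (a %/ N) * w ^+ (a %% N) - w ^+ (a %% N)
   = ((w ^+ N) ^+ (a %/ N) - 1) * w ^+ (a %% N) by ring.
apply: dvdp_mulr.
rewrite subrX1; exact: dvdp_mulr.
Qed.

Lemma pow_cong g w N a b : g %| w ^+ N - 1 -> (a %% N = b %% N)%N ->
  g %| w ^+ a - w ^+ b.
Proof.
move=> hN hab.
have -> : w ^+ a - w ^+ b = (w ^+ a - w ^+ (a %% N)) - (w ^+ b - w ^+ (b %% N)).
  by rewrite hab; ring.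
by apply: dvdp_sub; apply: pow_modN.
Qed.

Lemma elog_spec g w f : g \is monic -> irreducible_poly g -> is_gen g w ->
  coprimep f g ->
  let N := (#|F| ^ (size g).-1 - 1)%N in
  (elog g w f N < N)%N /\ g %| w ^+ (elog g w f N) - f.
Proof.
move=> gm gi [cw gen] cf N.
have hN := wN1 gm gi cw.
have [e he] := gen f cf.
have Npos : (0 < N)%N.
  rewrite /N subn_gt0.
  have h1 : (1 < size g)%N by case: gi.
  have h2 : (1 < #|F|)%N := finNzRing_gt1 F.
  by rewrite -(expn0 #|F|) ltn_exp2l // -subn1 subn_gt0.
have he' : g %| w ^+ (e %% N) - f.
  have -> : w ^+ (e %% N) - f = (w ^+ e - f) - (w ^+ e - w ^+ (e %% N)) by ring.
  by apply: dvdp_sub he _; apply: pow_modN hN.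
have hhas : has (fun e => g %| w ^+ e - f) (iota 0 N).
  apply/hasP; exists (e %% N)%N => //.
  by rewrite mem_iota add0n ltn_pmod.
split.
  by rewrite /elog -{2}(size_iota 0 N) -has_find.
have := nth_find 0%N hhas.
rewrite nth_iota ?add0n //.
by rewrite -{2}(size_iota 0 N) -has_find.
Qed.

Lemma irr_coprime f g : irreducible_poly f -> irreducible_poly g ->
  size f != size g -> coprimep f g.
Proof.
move=> fi gi hs.
rewrite irreducible_poly_coprime //; apply/negP => hfg.
have hf1 : size f != 1%N by case: fi => h _; rewrite neq_ltn h orbT.
have := apply_irredp gi hf1 hfg => /eqp_size hs'.
by rewrite hs' eqxx in hs.
Qed.

Lemma pair_eq f1 f2 f3 f4 :
  f1 \is monic -> f2 \is monic -> f3 \is monic -> f4 \is monic ->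
  irreducible_poly f1 -> irreducible_poly f3 -> irreducible_poly f4 ->
  f1 * f2 = f3 * f4 -> (f1 = f3 /\ f2 = f4) \/ (f1 = f4 /\ f2 = f3).
Proof.
move=> m1 m2 m3 m4 i1 i3 i4 E.
have hd : f1 %| f3 * f4 by rewrite -E dvdp_mulr.
have hf1 : size f1 != 1%N by case: i1 => h _; rewrite neq_ltn h orbT.
have nz1 : f1 != 0 by apply: monic_neq0.
case: (boolP (f1 %| f3)) => h13.
  have e13 : f1 = f3.
    by apply/eqP; rewrite -eqp_monic //; apply: apply_irredp.
  left; split => //.
  by apply: (mulfI nz1); rewrite E e13.
have : coprimep f1 f3 by rewrite irreducible_poly_coprime // h13.
move=> c13.
have h14 : f1 %| f4 by rewrite -(Gauss_dvdpr _ c13).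
have e14 : f1 = f4.
  by apply/eqP; rewrite -eqp_monic //; apply: apply_irredp.
right; split => //.
by apply: (mulfI nz1); rewrite E e14 mulrC.
Qed.

End PolyFacts.
Section Prod.
Local Open Scope ring_scope.
Variable F : finFieldType.
Variable g : nat -> {poly F}.
Hypothesis hg : forall i, (0 < i)%N -> [/\ g i \is monic, irreducible_poly (g i) & size (g i) = (2 * i)%N].

Lemma prod_range (h : {poly F}) a n : (0 < a)%N ->
  (forall j, (a <= j < a + n)%N -> g j %| h) ->
  let Q := \prod_(i < n) g (a + i) in
  [/\ Q \is monic, size Q = (((a - 1 + n) ^ 2 - (a - 1) ^ 2).+1)%N,
      (forall j, (a + n <= j)%N -> coprimep Q (g j)) & Q %| h].
Proof.
move=> ha; elim: n => [|n IH] hd Q.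
  rewrite /Q big_ord0; split; rewrite ?monic1 ?size_poly1 ?addn0 ?subnn ?dvd1p //.
  by move=> j _; rewrite coprime1p.
have hd' : forall j, (a <= j < a + n)%N -> g j %| h.
  by move=> j /andP[h1 h2]; apply: hd; rewrite h1 addnS ltnS ltnW.
have [m1 s1 c1 d1] := IH hd'.
have [mg ig sg] := hg (ltn_addr n ha).
have cQg : coprimep (\prod_(i < n) g (a + i)) (g (a + n)) by apply: c1.
rewrite /Q big_ord_recr /=; split.
- by rewrite monicMl.
- rewrite size_monicM ?monic_neq0 // s1 sg.
  have -> : (a - 1 + n.+1 = (a - 1 + n).+1)%N by lia.
  rewrite !expnS !expn0 !muln1.
  nia.
- move=> j hj; rewrite coprimepMl; apply/andP; split.
    by apply: c1; lia.
  have hj0 : (0 < j)%N by lia.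
  have [_ ij sj] := hg hj0.
  by apply: irr_coprime => //; rewrite sg sj; apply/eqP; lia.
- rewrite Gauss_dvdp // d1 /=; apply: hd; lia.
Qed.

Lemma prod_range_size (h : {poly F}) a n : (0 < a)%N ->
  (forall j, (a <= j < a + n)%N -> g j %| h) ->
  (size h <= (a - 1 + n) ^ 2 - (a - 1) ^ 2)%N -> h = 0.
Proof.
move=> ha hd hs; apply/eqP; apply: contraTT hs => hn.
have [_ sQ _ dQ] := prod_range ha hd.
rewrite -ltnNge -ltnS -sQ.
by apply: dvdp_leq.
Qed.

End Prod.
Lemma size_flat (a c : nat -> nat) st k :
  size (flatten [seq [:: a i; c i] | i <- iota st k]) = (2 * k)%N.
Proof.
elim: k st => [|k IH] st //=.
by rewrite IH; lia.
Qed.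

Lemma nth_flat (a c : nat -> nat) st k j : (j < k)%N ->
  nth 0%N (flatten [seq [:: a i; c i] | i <- iota st k]) (2 * j) = a (st + j)%N /\
  nth 0%N (flatten [seq [:: a i; c i] | i <- iota st k]) (2 * j).+1 = c (st + j)%N.
Proof.
elim: k st j => [|k IH] st j //= hj.
case: j hj => [|j] hj.
  by rewrite muln0 addn0.
have hj' : (j < k)%N by [].
have [E1 E2] := IH st.+1 j hj'.
have -> : (2 * j.+1 = (2 * j).+2)%N by lia.
by rewrite /= E1 E2 addSnnS.
Qed.

Section Main.
Variables (p : nat) (A : seq nat) (F : finFieldType) (g w : nat -> {poly F})
  (r : {poly F} -> nat -> nat) (s : {poly F} -> nat) (C0 : nat).
Hypothesis hp2 : (2 <= p)%N.
Hypothesis hA1 : forall a, a \in A -> (a <= p./2 - 1)%N.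
Hypothesis hA2 : forall a b c t, a \in A -> b \in A -> c \in A -> (t <= 1)%N -> a != (b + c + t)%N.
Hypothesis hC : (200 <= C0)%N.
Hypothesis hq : (C0 <= #|F|)%N.
Hypothesis hg : forall i : nat, (0 < i)%N ->
     [/\ g i \is monic, irreducible_poly (g i), size (g i) = (2 * i)%N & is_gen (g i) (w i)].
Hypothesis hrs : forall (k : nat) (f : {poly F}), (C0 <= k)%N -> inFk k f ->
     (forall i, (1 <= i <= k)%N -> r f i \in A) /\ (1 <= s f <= #|F| ^ (3 * k))%N.

Local Notation q := #|F|.
Definition bb := Defs.bseq #|F| p.
Definition ee (f : {poly F}) i := elog (g i) (w i) f (#|F| ^ (2 * i).-1 - 1).
Definition digs k f := flatten [seq [:: ee f i; r f i] | i <- iota 1 k] ++ [:: s f].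
Definition nv k f := nval p g w r s k f.
Definition VV k f t := gbase bb (take t (digs k f)).
Definition good k (f : {poly F}) := (C0 <= k)%N /\ inFk k f.

Lemma size_digs k f : size (digs k f) = (2 * k).+1.
Proof. by rewrite /digs size_cat size_flat addn1. Qed.

Lemma nth_digs k f j : (j < k)%N ->
  nth 0%N (digs k f) (2 * j) = ee f j.+1 /\ nth 0%N (digs k f) (2 * j).+1 = r f j.+1.
Proof.
move=> hj; rewrite /digs !nth_cat size_flat.
have -> : (2 * j < 2 * k)%N by lia.
have -> : ((2 * j).+1 < 2 * k)%N by lia.
by have [-> ->] := nth_flat (ee f) (r f) 1 hj.
Qed.

Lemma nth_digs_s k f : nth 0%N (digs k f) (2 * k) = s f.
Proof. by rewrite /digs nth_cat size_flat ltnn subnn. Qed.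

Lemma q_ge : (200 <= q)%N.
Proof. exact: leq_trans hC hq. Qed.

Lemma bb_odd j : bb (2 * j).+1 = (q ^ (2 * j).+1 - 1)%N.
Proof. by rewrite /bb /Defs.bseq /= oddM. Qed.

Lemma bb_even j : bb (2 * j).+2 = p.
Proof. by rewrite /bb /Defs.bseq /= oddM. Qed.

Lemma bb_ge2 t : (2 <= bb t.+1)%N.
Proof.
rewrite /bb /Defs.bseq; case: ifP => _ //.
have := q_ge => hq2.
have : (q ^ 1 <= q ^ t.+1)%N by rewrite leq_exp2l //; lia.
rewrite expn1; lia.
Qed.

Lemma PP_pos t : (0 < PP bb t)%N.
Proof.
elim: t => [|t IH]; first by rewrite PP0.
rewrite PPS muln_gt0 IH /=; have := bb_ge2 t; lia.
Qed.

Lemma PP_double t : (2 * PP bb t <= PP bb t.+1)%N.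
Proof. rewrite PPS mulnC; apply: leq_mul => //; exact: bb_ge2. Qed.

Lemma PP_mono t u : (t <= u)%N -> (PP bb t <= PP bb u)%N.
Proof.
move=> htu; rewrite -(subnKC htu).
elim: (u - t)%N => [|n IH]; first by rewrite addn0.
rewrite addnS; apply: leq_trans IH _; have := PP_double (t + n); have := PP_pos (t + n); lia.
Qed.

Lemma PP_lt2 t u : (t < u)%N -> (2 * PP bb t <= PP bb u)%N.
Proof. move=> htu; apply: leq_trans (PP_double t) (PP_mono htu). Qed.

Section Good.
Variables (k : nat) (f : {poly F}).
Hypothesis hk : good k f.

Lemma good_r j : (j < k)%N -> (r f j.+1 <= p./2 - 1)%N.
Proof.
move=> hj; case: hk => hk1 hk2; have [hr _] := hrs hk1 hk2.
by apply: hA1; apply: hr; lia.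
Qed.

Lemma good_s : (1 <= s f <= q ^ (3 * k))%N.
Proof. by case: hk => hk1 hk2; have [_ hs] := hrs hk1 hk2. Qed.

Lemma f_deg : exists i, size f = (2 * i).+1 /\ (7 * k ^ 2 <= 40 * i)%N /\ (40 * i < 7 * k.+1 ^ 2)%N.
Proof. by case: hk => _ [_ [_ H]]. Qed.

Lemma f_monic : f \is monic.
Proof. by case: hk => _ [H _]. Qed.

Lemma f_irr : irreducible_poly f.
Proof. by case: hk => _ [_ [H _]]. Qed.

Lemma good_e j : (ee f j.+1 < bb (2 * j).+1)%N /\ (g j.+1 %| w j.+1 ^+ (ee f j.+1) - f)%R.
Proof.
have [gm gi gs gg] := hg (ltn0Sn j).
have cf : coprimep f (g j.+1).
  apply: irr_coprime => //; first exact: f_irr.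
  have [i [-> _]] := f_deg; rewrite gs; apply/eqP; lia.
have E : (2 * j.+1).-1 = (2 * j).+1 by lia.
rewrite /ee bb_odd -E -gs; exact: elog_spec gm gi gg cf.
Qed.

Lemma digit_lt t : (t < 2 * k)%N -> (nth 0%N (digs k f) t < bb t.+1)%N.
Proof.
move=> ht.
have [j [hj [E|E]]] : exists j, (j < k)%N /\ (t = 2 * j \/ t = (2 * j).+1)%N.
  exists t./2; split; first by rewrite ltn_half_double; lia.
  have := odd_double_half t; case: (odd t) => /= E; [right|left]; lia.
- subst t; have [-> _] := nth_digs f hj; exact: (good_e j).1.
- subst t; have [_ ->] := nth_digs f hj; rewrite bb_even.
  have := good_r hj; lia.
Qed.

Lemma VV_succ t : (t <= 2 * k)%N -> VV k f t.+1 = (VV k f t + nth 0%N (digs k f) t * PP bb t)%N.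
Proof. by move=> ht; rewrite /VV gbase_take_succ // size_digs. Qed.

Lemma VV_lt t : (t <= 2 * k)%N -> (VV k f t < PP bb t)%N.
Proof.
elim: t => [|t IH] ht; first by rewrite /VV take0 /gbase big_ord0 PP0.
rewrite VV_succ; last by lia.
have h1 := IH (ltnW ht).
have h2 := digit_lt ht.
rewrite PPS.
have : (nth 0%N (digs k f) t * PP bb t <= (bb t.+1 - 1) * PP bb t)%N by apply: leq_mul => //; lia.
nia.
Qed.

Lemma nv_split t : (t <= (2 * k).+1)%N -> exists H, nv k f = (VV k f t + PP bb t * H)%N.
Proof. by move=> ht; apply: gbase_split; rewrite size_digs. Qed.

Lemma VV_full : nv k f = VV k f (2 * k).+1.
Proof. by rewrite /VV -(size_digs k f) take_size. Qed.

Lemma VV_e j : (j <= k)%N -> (2 * VV k f (2 * j) < PP bb (2 * j))%N /\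
   (0 < j -> VV k f (2 * j) + PP bb (2 * j).-1 <= PP bb (2 * j))%N.
Proof.
case: j => [|j] hj.
  by rewrite muln0 /VV take0 /gbase big_ord0 PP0.
have -> : (2 * j.+1 = (2 * j).+2)%N by lia.
rewrite /= VV_succ; last by lia.
have [_ ->] := nth_digs f hj.
have ht1 : ((2 * j).+1 <= 2 * k)%N by lia.
have h1 := VV_lt ht1.
have h2 := good_r hj.
rewrite [PP bb (2 * j).+2]PPS bb_even /=.
have hh : (2 * p./2 <= p /\ 1 <= p./2)%N.
  have := odd_double_half p; case: (odd p) => /= E; lia.
nia.
Qed.

Lemma nv_ge : (PP bb (2 * k) <= nv k f)%N.
Proof.
rewrite VV_full VV_succ // nth_digs_s.
have := good_s; have := PP_pos (2 * k); nia.
Qed.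

Lemma nv_lt : (nv k f < PP bb (2 * k).+3)%N.
Proof.
rewrite VV_full VV_succ // nth_digs_s.
have hV := VV_lt (leqnn (2 * k)).
have [_ hs] := andP good_s.
have -> : PP bb (2 * k).+3 = (PP bb (2 * k) * (bb (2 * k).+1 * bb (2 * k).+2 * bb (2 * (k.+1)).+1))%N.
  have -> : (2 * k.+1).+1 = (2 * k).+3 by lia.
  by rewrite !PPS -!mulnA.
rewrite bb_odd bb_even bb_odd.
have hq2 := q_ge.
set Y := (q ^ k)%N.
have hY : (1 <= Y)%N by rewrite expn_gt0; lia.
have E1 : (q ^ (2 * k).+1 = q * (Y * Y))%N by rewrite /Y -expnD -expnS; congr (_ ^ _); lia.
have E2 : (q ^ (2 * k.+1).+1 = q * (q * (q * (Y * Y))))%N by rewrite /Y -expnD -!expnS; congr (_ ^ _); lia.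
have E3 : (q ^ (3 * k) = Y * Y * Y)%N by rewrite /Y -!expnD; congr (_ ^ _); lia.
rewrite E3 in hs; rewrite E1 E2.
have h1 : (Y * Y <= q * (Y * Y) - 1)%N by nia.
have h2 : (Y <= q * (q * (q * (Y * Y))) - 1)%N by nia.
have h3 : (Y * Y * Y + 1 <= (q * (Y * Y) - 1) * p * (q * (q * (q * (Y * Y))) - 1))%N.
  apply: leq_trans (_ : Y * Y * 2 * Y <= _)%N; first by nia.
  apply: leq_mul => //; apply: leq_mul => //.
have := PP_pos (2 * k).
nia.
Qed.

Lemma expand_e j : (j < k)%N -> exists H,
  nv k f = (VV k f (2 * j) + PP bb (2 * j) * (ee f j.+1 + bb (2 * j).+1 * H))%N.
Proof.
move=> hj.
have ht : ((2 * j).+1 <= (2 * k).+1)%N by lia.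
have [H EH] := nv_split ht.
exists H; rewrite EH VV_succ; last by lia.
have [-> _] := nth_digs f hj.
rewrite PPS; ring.
Qed.

Lemma expand_r j : (j < k)%N -> exists H,
  nv k f = (VV k f (2 * j) + PP bb (2 * j) * (ee f j.+1 + bb (2 * j).+1 * (r f j.+1 + p * H)))%N.
Proof.
move=> hj.
have ht : ((2 * j).+2 <= (2 * k).+1)%N by lia.
have [H EH] := nv_split ht.
exists H; rewrite EH VV_succ; last by lia.
rewrite VV_succ; last by lia.
have [-> ->] := nth_digs f hj.
rewrite [PP bb (2 * j).+2]PPS bb_even [PP bb (2 * j).+1]PPS; ring.
Qed.

End Good.
Arguments good_r {k f}.
Arguments good_s {k f}.
Arguments f_deg {k f}.
Arguments f_monic {k f}.
Arguments f_irr {k f}.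
Arguments good_e {k f}.
Arguments digit_lt {k f}.
Arguments VV_succ {k f}.
Arguments VV_lt {k f}.
Arguments nv_split {k f}.
Arguments VV_full {k f}.
Arguments VV_e {k f}.
Arguments nv_ge {k f}.
Arguments nv_lt {k f}.
Arguments expand_e {k f}.
Arguments expand_r {k f}.
Lemma good_rA k f j : good k f -> (j < k)%N -> r f j.+1 \in A.
Proof.
move=> [hk1 hk2] hj; have [hr _] := hrs hk1 hk2.
by apply: hr; lia.
Qed.

Arguments good_rA {k f j}.

Lemma dmu P X Y X' Y' : (X + P * Y = X' + P * Y')%N -> (X < P)%N -> (X' < P)%N -> X = X' /\ Y = Y'.
Proof. by move=> E h1 h2; apply: dm_uniq h1 h2 E. Qed.


Lemma dvd5 (d a1 a2 a3 a4 a5 x1 x2 x3 x4 x5 : {poly F}) :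
  (d %| a1 -> d %| a2 -> d %| a3 -> d %| a4 -> d %| a5 ->
  d %| a1 * x1 + a2 * x2 + a3 * x3 + a4 * x4 + a5 * x5)%R.
Proof. by move=> *; rewrite !dvdp_add ?dvdp_mulr. Qed.

Lemma gN1 j : (g j.+1 %| w j.+1 ^+ bb (2 * j).+1 - 1)%R.
Proof.
have [gm gi gs [cw _]] := hg (ltn0Sn j).
have := wN1 gm gi cw; rewrite gs bb_odd.
by have -> : (2 * j.+1).-1 = (2 * j).+1 by lia.
Qed.

Lemma econg k1 f1 k2 f2 k3 f3 k4 f4 j :
  good k1 f1 -> good k2 f2 -> good k3 f3 -> good k4 f4 ->
  (j < k1)%N -> (j < k2)%N -> (j < k3)%N -> (j < k4)%N ->
  (nv k1 f1 + nv k2 f2 = nv k3 f3 + nv k4 f4)%N ->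
  (g j.+1 %| f1 * f2 - f3 * f4)%R.
Proof.
move=> g1 g2 g3 g4 j1 j2 j3 j4 E.
have [H1 E1] := expand_e (f:=f1) j j1.
have [H2 E2] := expand_e (f:=f2) j j2.
have [H3 E3] := expand_e (f:=f3) j j3.
have [H4 E4] := expand_e (f:=f4) j j4.
have [v1 _] := VV_e g1 j (ltnW j1).
have [v2 _] := VV_e g2 j (ltnW j2).
have [v3 _] := VV_e g3 j (ltnW j3).
have [v4 _] := VV_e g4 j (ltnW j4).
set P := PP bb (2 * j) in v1 v2 v3 v4 E1 E2 E3 E4.
set B := bb (2 * j).+1 in E1 E2 E3 E4.
have Eq : (VV k1 f1 (2 * j) + VV k2 f2 (2 * j) + P * (ee f1 j.+1 + ee f2 j.+1 + B * (H1 + H2)) =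
  VV k3 f3 (2 * j) + VV k4 f4 (2 * j) + P * (ee f3 j.+1 + ee f4 j.+1 + B * (H3 + H4)))%N.
  have -> : (VV k1 f1 (2 * j) + VV k2 f2 (2 * j) + P * (ee f1 j.+1 + ee f2 j.+1 + B * (H1 + H2)) = nv k1 f1 + nv k2 f2)%N.
    by rewrite E1 E2; ring.
  by rewrite E E3 E4; ring.
have [_ Eq2] := dmu Eq (ltac:(lia)) (ltac:(lia)).
have hmod : ((ee f1 j.+1 + ee f2 j.+1) %% B = (ee f3 j.+1 + ee f4 j.+1) %% B)%N.
  have := congr1 (modn ^~ B) Eq2; rewrite /= ![(_ + B * _)%N]addnC ![(B * _)%N]mulnC !modnMDl.
  by [].
have hw := pow_cong (gN1 j) hmod.
have [_ d1] := good_e g1 j.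
have [_ d2] := good_e g2 j.
have [_ d3] := good_e g3 j.
have [_ d4] := good_e g4 j.
set W1 := (w j.+1 ^+ ee f1 j.+1)%R in d1.
set W2 := (w j.+1 ^+ ee f2 j.+1)%R in d2.
set W3 := (w j.+1 ^+ ee f3 j.+1)%R in d3.
set W4 := (w j.+1 ^+ ee f4 j.+1)%R in d4.
rewrite !exprD -/W1 -/W2 -/W3 -/W4 in hw.
have -> : (f1 * f2 - f3 * f4 = (W1 - f1) * (- f2) + (W2 - f2) * (- W1) + (W1 * W2 - W3 * W4) * 1
    + (W3 - f3) * f4 + (W4 - f4) * W3)%R by ring.
exact: dvd5.
Qed.

Lemma argA k1 f1 n2 k3 f3 k4 f4 j :
  good k1 f1 -> good k3 f3 -> good k4 f4 -> (0 < j)%N ->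
  (j < k1)%N -> (j < k3)%N -> (j < k4)%N -> (n2 < PP bb (2 * j).-1)%N ->
  (nv k1 f1 + n2 = nv k3 f3 + nv k4 f4)%N -> False.
Proof.
move=> g1 g3 g4 j0 j1 j3 j4 hn2 E.
have [H1 E1] := expand_r (f:=f1) j j1.
have [H3 E3] := expand_r (f:=f3) j j3.
have [H4 E4] := expand_r (f:=f4) j j4.
have [_ v1] := VV_e g1 j (ltnW j1).
have [v3 _] := VV_e g3 j (ltnW j3).
have [v4 _] := VV_e g4 j (ltnW j4).
have v1' := v1 j0.
have [e1 _] := good_e g1 j.
have [e3 _] := good_e g3 j.
have [e4 _] := good_e g4 j.
have r1 := good_r g1 j j1.
have r3 := good_r g3 j j3.
have r4 := good_r g4 j j4.
have A1 := good_rA g1 j1.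
have A3 := good_rA g3 j3.
have A4 := good_rA g4 j4.
have hh : (2 * p./2 <= p /\ 1 <= p./2)%N.
  have := odd_double_half p; case: (odd p) => /= E'; lia.
set P := PP bb (2 * j) in v1' v3 v4 E1 E3 E4.
set Q := PP bb (2 * j).-1 in v1' hn2.
set B := bb (2 * j).+1 in E1 E3 E4 e1 e3 e4.
set a1 := ee f1 j.+1 in E1 e1.
set a3 := ee f3 j.+1 in E3 e3.
set a4 := ee f4 j.+1 in E4 e4.
set b1 := r f1 j.+1 in E1 r1 A1.
set b3 := r f3 j.+1 in E3 r3 A3.
set b4 := r f4 j.+1 in E4 r4 A4.
have Eq : ((VV k1 f1 (2 * j) + n2) + P * (a1 + B * (b1 + p * H1)) =
  (VV k3 f3 (2 * j) + VV k4 f4 (2 * j)) + P * ((a3 + a4) + B * ((b3 + b4) + p * (H3 + H4))))%N.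
  have -> : ((VV k1 f1 (2 * j) + n2) + P * (a1 + B * (b1 + p * H1)) = nv k1 f1 + n2)%N.
    by rewrite E1; ring.
  by rewrite E E3 E4; ring.
have [_ Eq2] := dmu Eq (ltac:(lia)) (ltac:(lia)).
have fin : forall c, (c <= 1)%N -> (b1 + p * H1 = (b3 + b4 + c) + p * (H3 + H4))%N -> False.
  move=> c hc Ec.
  have [Ec' _] := dmu Ec (ltac:(lia)) (ltac:(lia)).
  by have := hA2 A1 A3 A4 hc; rewrite Ec' eqxx.
case: (ltnP (a3 + a4) B) => hB.
  have Eq3 : (a1 + B * (b1 + p * H1) = (a3 + a4) + B * (b3 + b4 + 0 + p * (H3 + H4)))%N by rewrite addn0.
  have [_ E5] := dmu Eq3 e1 hB.
  exact: (fin 0%N) E5.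
have Eq3 : (a1 + B * (b1 + p * H1) = (a3 + a4 - B) + B * (b3 + b4 + 1 + p * (H3 + H4)))%N.
  rewrite Eq2; nia.
have [_ E5] := dmu Eq3 e1 (ltac:(lia)).
exact: (fin 1%N) E5.
Qed.

Lemma argC k1 f1 n2 k4 f4 n3 j :
  good k1 f1 -> good k4 f4 -> (0 < j)%N -> (j < k1)%N -> (j < k4)%N ->
  (n2 < PP bb (2 * j).-1)%N -> (n3 < PP bb (2 * j).-1)%N ->
  (nv k1 f1 + n2 = nv k4 f4 + n3)%N -> (g j.+1 %| f1 - f4)%R.
Proof.
move=> g1 g4 j0 j1 j4 hn2 hn3 E.
have [H1 E1] := expand_e (f:=f1) j j1.
have [H4 E4] := expand_e (f:=f4) j j4.
have [_ v1] := VV_e g1 j (ltnW j1).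
have [_ v4] := VV_e g4 j (ltnW j4).
have v1' := v1 j0.
have v4' := v4 j0.
have [e1 d1] := good_e g1 j.
have [e4 d4] := good_e g4 j.
set P := PP bb (2 * j) in v1' v4' E1 E4.
set Q := PP bb (2 * j).-1 in v1' v4' hn2 hn3.
set B := bb (2 * j).+1 in E1 E4 e1 e4.
have Eq : ((VV k1 f1 (2 * j) + n2) + P * (ee f1 j.+1 + B * H1) =
  (VV k4 f4 (2 * j) + n3) + P * (ee f4 j.+1 + B * H4))%N.
  have -> : ((VV k1 f1 (2 * j) + n2) + P * (ee f1 j.+1 + B * H1) = nv k1 f1 + n2)%N.
    by rewrite E1; ring.
  by rewrite E E4; ring.
have [_ Eq2] := dmu Eq (ltac:(lia)) (ltac:(lia)).
have [Eq3 _] := dmu Eq2 e1 e4.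
rewrite Eq3 in d1.
have -> : (f1 - f4 = (w j.+1 ^+ ee f4 j.+1 - f4) - (w j.+1 ^+ ee f4 j.+1 - f1))%R by ring.
exact: dvdp_sub.
Qed.

Lemma hg3 i : (0 < i)%N -> [/\ g i \is monic, irreducible_poly (g i) & size (g i) = (2 * i)%N].
Proof. by move=> hi; have [? ? ? _] := hg hi. Qed.

Lemma prodL k1 f1 k2 f2 k3 f3 k4 f4 m :
  good k1 f1 -> good k2 f2 -> good k3 f3 -> good k4 f4 ->
  (m <= k1)%N -> (m <= k2)%N -> (m <= k3)%N -> (m <= k4)%N ->
  (size f1 + size f2 <= m ^ 2)%N -> (size f3 + size f4 <= m ^ 2)%N ->
  (nv k1 f1 + nv k2 f2 = nv k3 f3 + nv k4 f4)%N ->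
  (f1 = f3 /\ f2 = f4) \/ (f1 = f4 /\ f2 = f3).
Proof.
move=> g1 g2 g3 g4 m1 m2 m3 m4 s12 s34 E.
apply: pair_eq; try apply: f_monic; try apply: f_irr; try eassumption.
apply/eqP; rewrite -subr_eq0; apply/eqP.
apply: (prod_range_size hg3 (a := 1%N) (n := m)) => //.
  move=> j /andP[h1 h2].
  have -> : j = j.-1.+1 by lia.
  apply: (econg g1 g2 g3 g4) => //; lia.
have -> : ((1 - 1 + m) ^ 2 - (1 - 1) ^ 2 = m ^ 2)%N by rewrite subnn add0n exp0n // subn0.
apply: leq_trans (size_polyD _ _) _; rewrite size_polyN geq_max.
rewrite !size_monicM ?monic_neq0 //; try apply: f_monic; try eassumption.
by rewrite !(leq_trans (leq_pred _)) //.
Qed.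

Lemma rangeL k1 f1 k4 f4 a n :
  good k1 f1 -> good k4 f4 -> (0 < a)%N ->
  (forall j, (a <= j < a + n)%N -> (g j %| f1 - f4)%R) ->
  (maxn (size f1) (size f4) <= (a - 1 + n) ^ 2 - (a - 1) ^ 2)%N -> f1 = f4.
Proof.
move=> g1 g4 ha hd hs.
apply/eqP; rewrite -subr_eq0; apply/eqP.
apply: (prod_range_size hg3 ha hd).
by apply: leq_trans (size_polyD _ _) _; rewrite size_polyN.
Qed.

Lemma k_uniq k k' f : good k f -> good k' f -> k = k'.
Proof.
move=> g1 g2; have [i [Ei [i1 i2]]] := f_deg g1; have [i' [Ei' [i1' i2']]] := f_deg g2.
have ii : i = i' by move: Ei; rewrite Ei' => [[]]; lia.
subst i'.
case: (ltngtP k k') => // h.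
- have : (k.+1 ^ 2 <= k' ^ 2)%N by rewrite leq_exp2r.
  lia.
- have : (k'.+1 ^ 2 <= k ^ 2)%N by rewrite leq_exp2r.
  lia.
Qed.

Lemma size_ub k f K : good k f -> (k <= K)%N -> (20 * size f < 7 * K.+1 ^ 2 + 20)%N.
Proof.
move=> gk hK; have [i [-> [_ hi]]] := f_deg gk.
have : (k.+1 ^ 2 <= K.+1 ^ 2)%N by rewrite leq_exp2r.
lia.
Qed.

Lemma caseC k1 f1 k2 f2 k3 f3 k4 f4 :
  good k1 f1 -> good k2 f2 -> good k3 f3 -> good k4 f4 ->
  (k2 <= k3)%N -> (k3 <= k2 + 2)%N -> (k2 + 3 <= k1)%N -> (k2 + 3 <= k4)%N ->
  (nv k1 f1 + nv k2 f2 = nv k3 f3 + nv k4 f4)%N ->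
  (f1 = f3 /\ f2 = f4) \/ (f1 = f4 /\ f2 = f3).
Proof.
move=> g1 g2 g3 g4 h23 h32 h21 h24 E.
have [m Em] : exists m, k2 = m by eexists.
subst k2.
have hm : (200 <= m)%N by case: g2 => ? _; lia.
have l1 := nv_ge g1; have u1 := nv_lt g1.
have l4 := nv_ge g4; have u4 := nv_lt g4.
have u2 := nv_lt g2; have u3 := nv_lt g3.
have u3' : (nv k3 f3 < PP bb (2 * m + 7))%N.
  by apply: leq_trans u3 (PP_mono _); lia.
have k14 : (k1 <= k4 + 1)%N.
  case: (leqP k1 (k4 + 1)) => // hk.
  have a1 : (PP bb (2 * k4 + 4) <= PP bb (2 * k1))%N by apply: PP_mono; lia.
  have a2 : (2 * PP bb (2 * k4 + 3) <= PP bb (2 * k4 + 4))%N by apply: PP_lt2; lia.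
  have a3 : (PP bb (2 * m + 7) <= PP bb (2 * k4 + 3))%N by apply: PP_mono; lia.
  have a4 : (PP bb (2 * k4).+3 = PP bb (2 * k4 + 3)) by f_equal; lia.
  lia.
have k41 : (k4 <= k1 + 1)%N.
  case: (leqP k4 (k1 + 1)) => // hk.
  have a1 : (PP bb (2 * k1 + 4) <= PP bb (2 * k4))%N by apply: PP_mono; lia.
  have a2 : (2 * PP bb (2 * k1 + 3) <= PP bb (2 * k1 + 4))%N by apply: PP_lt2; lia.
  have a3 : (PP bb (2 * m).+3 <= PP bb (2 * k1 + 3))%N by apply: PP_mono; lia.
  have a4 : (PP bb (2 * k1).+3 = PP bb (2 * k1 + 3)) by f_equal; lia.
  lia.
have [K EK] : exists K, K = minn k1 k4 by eexists.
have hK1 : (K <= k1)%N by rewrite EK; apply: geq_minl.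
have hK4 : (K <= k4)%N by rewrite EK; apply: geq_minr.
have hK1' : (k1 <= K.+1)%N by rewrite EK; case: (leqP k1 k4) => h; lia.
have hK4' : (k4 <= K.+1)%N by rewrite EK; case: (leqP k1 k4) => h; lia.
have hKm : (m + 3 <= K)%N by rewrite EK; case: (leqP k1 k4) => h; lia.
have s1 := size_ub g1 (K := K.+1) hK1'.
have s4 := size_ub g4 (K := K.+1) hK4'.
have s2 := size_ub g2 (K := m) (leqnn _).
have s3 := size_ub g3 (K := m + 2) h32.
have sqK : (K.+2 ^ 2 = K ^ 2 + 4 * K + 4)%N by ring.
have sqm1 : (m.+1 ^ 2 = m ^ 2 + 2 * m + 1)%N by ring.
have sqm3 : ((m + 2).+1 ^ 2 = m ^ 2 + 6 * m + 9)%N by ring.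
have sqm4 : ((m + 4) ^ 2 = m ^ 2 + 8 * m + 16)%N by ring.
have mm : (200 * m <= m ^ 2)%N by rewrite expnS expn1 mulnC leq_mul2l hm orbT.
have KK : (200 * K <= K ^ 2)%N by rewrite expnS expn1 mulnC leq_mul2l; apply/orP; right; lia.
case: (ltnP (3 * K ^ 2) (5 * m ^ 2)) => hc.
  have hK2 : (K <= 2 * m)%N.
    case: (leqP K (2 * m)) => // h.
    have : ((2 * m) ^ 2 <= K ^ 2)%N by rewrite leq_exp2r //; lia.
    have -> : ((2 * m) ^ 2 = 4 * m ^ 2)%N by ring.
    lia.
  have Km : (K * m <= 2 * m ^ 2)%N by nia.
  have KK2 : (K ^ 2 <= 2 * K * m)%N by nia.
  apply: (prodL g1 g2 g3 g4 (m := m)) => //; lia.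
right.
have hKm4 : (m + 40 <= K)%N.
  case: (leqP (m + 40) K) => // h.
  have : (K ^ 2 <= (m + 39) ^ 2)%N by rewrite leq_exp2r //; lia.
  have -> : ((m + 39) ^ 2 = m ^ 2 + 78 * m + 1521)%N by ring.
  lia.
have e14 : f1 = f4.
  apply: (rangeL g1 g4 (a := m + 5) (n := K - m - 4)); first by lia.
    move=> j /andP[ja jb].
    have -> : j = j.-1.+1 by lia.
    apply: (argC g1 g4 (n2 := nv m f2) (n3 := nv k3 f3)); try lia.
    + apply: leq_trans u2 (PP_mono _); lia.
    + apply: leq_trans u3' (PP_mono _); lia.
  have -> : (m + 5 - 1 + (K - m - 4) = K)%N by lia.
  have -> : (m + 5 - 1 = m + 4)%N by lia.
  rewrite geq_max; apply/andP; split; lia.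
split => //.
subst f4.
have ek : k1 = k4 by apply: k_uniq g1 g4.
subst k4.
have E2 : (nv m f2 + nv m f2 = nv k3 f3 + nv k3 f3)%N by lia.
have z1 : (size f2 + size f2 <= m ^ 2)%N by lia.
have z2 : (size f3 + size f3 <= m ^ 2)%N by lia.
have [[-> _]|[-> _]] := prodL g2 g2 g3 g3 (m := m) (leqnn _) (leqnn _) h23 h23 z1 z2 E2; by [].
Qed.

Lemma core k1 f1 k2 f2 k3 f3 k4 f4 :
  good k1 f1 -> good k2 f2 -> good k3 f3 -> good k4 f4 ->
  (k2 <= k1)%N -> (k2 <= k3)%N -> (k2 <= k4)%N ->
  (nv k1 f1 + nv k2 f2 = nv k3 f3 + nv k4 f4)%N ->
  (f1 = f3 /\ f2 = f4) \/ (f1 = f4 /\ f2 = f3).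
Proof.
move=> g1 g2 g3 g4 h21 h23 h24 E.
have [m Em] : exists m, k2 = m by eexists.
subst k2.
have hm : (200 <= m)%N by case: g2 => ? _; lia.
have l1 := nv_ge g1; have u1 := nv_lt g1.
have l3 := nv_ge g3; have u3 := nv_lt g3.
have l4 := nv_ge g4; have u4 := nv_lt g4.
have u2 := nv_lt g2.
have case1 : (k1 <= m + 3)%N -> (k3 <= m + 3)%N -> (k4 <= m + 3)%N ->
    (f1 = f3 /\ f2 = f4) \/ (f1 = f4 /\ f2 = f3).
  move=> c1 c3 c4.
  have s1 := size_ub g1 (K := m + 3) c1.
  have s2 := size_ub g2 (K := m + 3) (ltac:(lia)).
  have s3 := size_ub g3 (K := m + 3) c3.
  have s4 := size_ub g4 (K := m + 3) c4.
  have sq : ((m + 3).+1 ^ 2 = m ^ 2 + 8 * m + 16)%N by ring.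
  have mm : (200 * m <= m ^ 2)%N by rewrite expnS expn1 mulnC leq_mul2l hm orbT.
  apply: (prodL g1 g2 g3 g4 (m := m)) => //; lia.
have a2 : (2 * PP bb (2 * m + 7) <= PP bb (2 * m + 8))%N by apply: PP_lt2; lia.
case: (leqP k1 (m + 2)) => c1.
  have b1 : (PP bb (2 * k1).+3 <= PP bb (2 * m + 7))%N by apply: PP_mono; lia.
  have b2 : (PP bb (2 * m).+3 <= PP bb (2 * m + 7))%N by apply: PP_mono; lia.
  apply: case1; try lia.
  - case: (leqP k3 (m + 3)) => // c3.
    have : (PP bb (2 * m + 8) <= PP bb (2 * k3))%N by apply: PP_mono; lia.
    lia.
  - case: (leqP k4 (m + 3)) => // c4.
    have : (PP bb (2 * m + 8) <= PP bb (2 * k4))%N by apply: PP_mono; lia.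
    lia.
case: (leqP (m + 3) k3) => c3; case: (leqP (m + 3) k4) => c4.
- exfalso; apply: (argA g1 g3 g4 (j := m + 2) (n2 := nv m f2)); try lia.
  by apply: leq_trans u2 (PP_mono _); lia.
- have [[? ?]|[? ?]] := caseC g1 g2 g4 g3 (ltac:(lia)) (ltac:(lia)) (ltac:(lia)) (ltac:(lia)) (ltac:(lia)).
  + by right.
  + by left.
- exact: caseC g1 g2 g3 g4 (ltac:(lia)) (ltac:(lia)) (ltac:(lia)) (ltac:(lia)) E.
- have b3 : (PP bb (2 * k3).+3 <= PP bb (2 * m + 7))%N by apply: PP_mono; lia.
  have b4 : (PP bb (2 * k4).+3 <= PP bb (2 * m + 7))%N by apply: PP_mono; lia.
  apply: case1; try lia.
  case: (leqP k1 (m + 3)) => // c1'.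
  have : (PP bb (2 * m + 8) <= PP bb (2 * k1))%N by apply: PP_mono; lia.
  lia.
Qed.

Lemma four k1 f1 k2 f2 k3 f3 k4 f4 :
  good k1 f1 -> good k2 f2 -> good k3 f3 -> good k4 f4 ->
  (nv k1 f1 + nv k2 f2 = nv k3 f3 + nv k4 f4)%N ->
  (f1 = f3 /\ f2 = f4) \/ (f1 = f4 /\ f2 = f3).
Proof.
move=> g1 g2 g3 g4 E.
have : [\/ (k1 <= k2 /\ k1 <= k3 /\ k1 <= k4)%N, (k2 <= k1 /\ k2 <= k3 /\ k2 <= k4)%N,
          (k3 <= k1 /\ k3 <= k2 /\ k3 <= k4)%N | (k4 <= k1 /\ k4 <= k2 /\ k4 <= k3)%N].
  case: (leqP k1 k2) => a; case: (leqP k1 k3) => b; case: (leqP k1 k4) => c;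
  case: (leqP k2 k3) => d; case: (leqP k2 k4) => e; case: (leqP k3 k4) => h;
  first [ by apply: Or41; lia | by apply: Or42; lia | by apply: Or43; lia | by apply: Or44; lia | lia ].
case=> [[a [b c]]|[a [b c]]|[a [b c]]|[a [b c]]].
- have E' : (nv k2 f2 + nv k1 f1 = nv k3 f3 + nv k4 f4)%N by lia.
  by have [[-> ->]|[-> ->]] := core g2 g1 g3 g4 a b c E'; [right|left].
- exact: core g1 g2 g3 g4 a b c E.
- have E' : (nv k4 f4 + nv k3 f3 = nv k2 f2 + nv k1 f1)%N by lia.
  by have [[-> ->]|[-> ->]] := core g4 g3 g2 g1 c b a E'; [left|right].
- have E' : (nv k3 f3 + nv k4 f4 = nv k1 f1 + nv k2 f2)%N by lia.
  by have [[-> ->]|[-> ->]] := core g3 g4 g1 g2 c a b E'; [left|right].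
Qed.

Lemma sidon : Sidon (fun n => exists (k : nat) (f : {poly F}), (C0 <= k)%N /\ inFk k f /\ n = nval p g w r s k f).
Proof.
split.
  move=> n [k [f [h1 [h2 ->]]]].
  have gk : good k f by [].
  apply: leq_trans (PP_pos (2 * k)) (nv_ge gk).
move=> a b c d [ka [fa [ha1 [ha2 ->]]]] [kb [fb [hb1 [hb2 ->]]]]
  [kc [fc [hc1 [hc2 ->]]]] [kd [fd [hd1 [hd2 ->]]]] hab hcd E.
have ga : good ka fa by [].
have gb : good kb fb by [].
have gc : good kc fc by [].
have gd : good kd fd by [].
have [[e1 e2]|[e1 e2]] := four ga gb gc gd E.
- subst fc fd.
  have -> : kc = ka by apply: k_uniq gc ga.
  by have -> : kd = kb by apply: k_uniq gd gb.
- subst fd fc.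
  have ea : kd = ka by apply: k_uniq gd ga.
  have eb : kc = kb by apply: k_uniq gc gb.
  subst kd kc.
  lia.
Qed.

End Main.

Unset Implicit Arguments.

Theorem lemma4p1 (p : nat) (A : seq nat) :
  prime p -> good_A p A ->
  exists Cbound : nat, forall C0 : nat, (Cbound <= C0)%N -> (100 * p < C0)%N ->
  forall F : finFieldType, (C0 <= #|F|)%N ->
  forall g w : nat -> {poly F},
  (forall i : nat, (0 < i)%N ->
     [/\ g i \is monic, irreducible_poly (g i), size (g i) = (2 * i)%N & is_gen (g i) (w i)]) ->
  forall (r : {poly F} -> nat -> nat) (s : {poly F} -> nat),
  (forall (k : nat) (f : {poly F}), (C0 <= k)%N -> inFk k f ->
     (forall i, (1 <= i <= k)%N -> r f i \in A) /\ (1 <= s f <= #|F| ^ (3 * k))%N) ->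
  (forall (f1 f2 f3 f4 : {poly F}) (k1 k2 k3 k4 : nat),
     (C0 <= k1)%N -> (C0 <= k2)%N -> (C0 <= k3)%N -> (C0 <= k4)%N ->
     inFk k1 f1 -> inFk k2 f2 -> inFk k3 f3 -> inFk k4 f4 ->
     (nval p g w r s k1 f1 + nval p g w r s k2 f2 = nval p g w r s k3 f3 + nval p g w r s k4 f4)%N ->
     (f1 = f3 /\ f2 = f4) \/ (f1 = f4 /\ f2 = f3)) /\
  Sidon (fun n => exists (k : nat) (f : {poly F}), (C0 <= k)%N /\ inFk k f /\ n = nval p g w r s k f).

Proof.
move=> pp [hA1 [hA2 _]].
exists 200%N => C0 hC _ F hq g w hg r s hrs.
have hp2 : (1 < p)%N := prime_gt1 pp.
have hA1' : forall a, a \in A -> (a <= p./2 - 1)%N by move=> a /hA1 /andP[].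
split.
- move=> f1 f2 f3 f4 k1 k2 k3 k4 c1 c2 c3 c4 i1 i2 i3 i4 E.
  exact: (four hp2 hA1' hA2 hC hq hg hrs (conj c1 i1) (conj c2 i2) (conj c3 i3) (conj c4 i4) E).
- exact: (sidon hp2 hA1' hA2 hC hq hg hrs).
Qed.
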